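(* Let $\mathbf{X}$ and $\mathbf{Y}$ be $d$-dimensional random vectors whose components are mutually independent, i.e. $P(X_1=x_1,\dots,X_d=x_d)=\prod_{i=1}^dP(X_i=x_i)$ and $P(Y_1=y_1,\dots,Y_d=y_d)=\prod_{i=1}^dP(Y_i=y_i)$. Then $\mathbf{X}\succ_d\mathbf{Y}$ if and only if $\mathbf{X}\succ_{\mathrm{FSD}}\mathbf{Y}$.
   Context: For $\mathbf{x},\mathbf{y}\in\mathbb{R}^d$: $\mathbf{y}\preceq_p\mathbf{x}$ iff $y_i\le x_i$ for all $i$. CDF: $F_{\mathbf{X}}(\mathbf{x})=P(\mathbf{X}\preceq_p\mathbf{x})$. $\mathbf{X}\succeq_{\mathrm{FSD}}\mathbf{Y}$ iff $F_{\mathbf{X}}(\mathbf{v})\le F_{\mathbf{Y}}(\mathbf{v})$ for all $\mathbf{v}$; $\mathbf{X}\succ_{\mathrm{FSD}}\mathbf{Y}$ iff additionally strict inequality for some $\mathbf{v}$ (same for real random variables). Distributional dominance $\mathbf{X}\succ_d\mathbf{Y}$ iff $\mathbf{X}\succeq_{\mathrm{FSD}}\mathbf{Y}$ and $X_i\succ_{\mathrm{FSD}}Y_i$ for some $i\in\{1,\dots,d\}$. *)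

(* Defs.v *)
From HB Require Import structures.
From mathcomp Require Import all_boot all_order all_algebra.
From mathcomp Require Import all_classical all_reals all_analysis.
Set Implicit Arguments. Unset Strict Implicit. Unset Printing Implicit Defensive.
Import Order.TTheory GRing.Theory Num.Theory.
Local Open Scope classical_set_scope.
Local Open Scope ring_scope.

Section Defs.
Context {R : realType}.

Definition rvec {dT} {T : measurableType dT} (P : probability T R) (d : nat) :=
  'I_d -> {RV P >-> R}.

Definition lep {d : nat} (y x : 'I_d -> R) : Prop := forall i, y i <= x i.

Definition cdfv {dT} {T : measurableType dT} (P : probability T R) {d : nat}
  (X : rvec P d) (v : 'I_d -> R) : R :=
  fine (P [set w | lep (fun i => X i w) v]).

Definition cdf1 {dT} {T : measurableType dT} (P : probability T R)
  (X : {RV P >-> R}) (t : R) : R :=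
  fine (P [set w | X w <= t]).

Definition fsd_ge {d1 d2} {T1 : measurableType d1} {T2 : measurableType d2}
  (P1 : probability T1 R) (P2 : probability T2 R) {d : nat}
  (X : rvec P1 d) (Y : rvec P2 d) : Prop :=
  forall v, cdfv X v <= cdfv Y v.

Definition fsd_gt {d1 d2} {T1 : measurableType d1} {T2 : measurableType d2}
  (P1 : probability T1 R) (P2 : probability T2 R) {d : nat}
  (X : rvec P1 d) (Y : rvec P2 d) : Prop :=
  fsd_ge X Y /\ exists v, cdfv X v < cdfv Y v.

Definition fsd_gt1 {d1 d2} {T1 : measurableType d1} {T2 : measurableType d2}
  (P1 : probability T1 R) (P2 : probability T2 R)
  (X : {RV P1 >-> R}) (Y : {RV P2 >-> R}) : Prop :=
  (forall t, cdf1 X t <= cdf1 Y t) /\ exists t, cdf1 X t < cdf1 Y t.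

Definition dist_dom {d1 d2} {T1 : measurableType d1} {T2 : measurableType d2}
  (P1 : probability T1 R) (P2 : probability T2 R) {d : nat}
  (X : rvec P1 d) (Y : rvec P2 d) : Prop :=
  fsd_ge X Y /\ exists i, fsd_gt1 (X i) (Y i).

Definition discrete_rvec {dT} {T : measurableType dT} (P : probability T R)
  {d : nat} (X : rvec P d) : Prop :=
  exists S : set ('I_d -> R), countable S /\
    P [set w | S (fun i => X i w)] = 1%E.

Definition indep_components {dT} {T : measurableType dT} (P : probability T R)
  {d : nat} (X : rvec P d) : Prop :=
  forall x : 'I_d -> R,
    fine (P [set w | forall i, X i w = x i]) =
    \prod_(i < d) fine (P [set w | X i w = x i]).

End Defs.

(* Main.v *)
Require Import Defs.
From HB Require Import structures.
From mathcomp Require Import all_boot all_order all_algebra.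
From mathcomp Require Import all_classical all_reals all_analysis.
From mathcomp Require Import lra.
Set Warnings "-notation-overridden,-ambiguous-paths,-notation-incompatible-prefix".
Set Implicit Arguments. Unset Strict Implicit. Unset Printing Implicit Defensive.
Import Order.TTheory GRing.Theory Num.Theory.
Local Open Scope classical_set_scope.
Local Open Scope ring_scope.

Section H.
Context {R : realType} {dT : measure_display} {T : measurableType dT} (P : probability T R).
Local Notation pr A := (fine (P A)).

Lemma prE A : measurable A -> P A = (pr A)%:E.
Proof. by move=> mA; rewrite fineK // fin_num_measure. Qed.


Lemma pr_ge0 A : 0 <= pr A.
Proof. by apply: fine_ge0; apply: measure_ge0. Qed.


Lemma pr_le1 A : measurable A -> pr A <= 1.
Proof. by move=> mA; rewrite -lee_fin -prE // probability_le1. Qed.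


Lemma pr_le A B : measurable A -> measurable B -> A `<=` B -> pr A <= pr B.
Proof. by move=> mA mB AB; rewrite -lee_fin -!prE //; apply: le_measure; rewrite ?inE. Qed.


Lemma meas_le (Z : {RV P >-> R}) t : measurable [set w | Z w <= t].
Proof.
rewrite (_ : [set w | Z w <= t] = Z @^-1` [set` `]-oo, t]]).
  exact: measurable_funPTI (measurable_itv _).
by apply/seteqP; split => w /=; rewrite in_itv /=.
Qed.


Lemma meas_eq (Z : {RV P >-> R}) x : measurable [set w | Z w = x].
Proof.
rewrite (_ : [set w | Z w = x] = Z @^-1` [set x]) //.
Qed.


Lemma meas_forall d (Q : 'I_d -> set T) : (forall i, measurable (Q i)) ->
  measurable [set w | forall i, Q i w].
Proof.
move=> mQ; rewrite (_ : [set w | forall i, Q i w] = \bigcap_(i in setT) Q i).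
  by apply: fin_bigcap_measurable => //; exact: finite_finset.
by apply/seteqP; split => w /= h i //; apply: h.
Qed.





Lemma pr_full N A : measurable N -> P N = 1%E -> measurable A -> pr A <= pr (A `&` N).
Proof.
move=> mN PN mA.
have PC : P (~` N) = 0%E by rewrite probability_setC // PN subee.
have mC : measurable (~` N) by apply: measurableC.
have mAN : measurable (A `&` N) by apply: measurableI.
have h1 : (P (A `&` N `|` ~` N) <= P (A `&` N) + P (~` N))%E := measureU2 _ mAN mC.
have h2 : (P A <= P (A `&` N `|` ~` N))%E.
  apply: le_measure; rewrite ?inE //; first by apply: measurableU.
  by move=> w Aw; have [Nw|Nw] := pselect (N w); [left|right].
have := le_trans h2 h1.
rewrite PC adde0 (prE mA) (prE mAN).
by rewrite lee_fin.
Qed.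
Lemma pr_cont (F : nat -> set T) : (forall n, measurable (F n)) ->
  {homo F : n m / (n <= m)%N >-> (n <= m)%O} ->
  forall e, 0 < e -> exists n, pr (\bigcup_n F n) <= pr (F n) + e.
Proof.
move=> mF ndF e e0.
have mU : measurable (\bigcup_n F n) by apply: bigcupT_measurable.
have hc : (P \o F) x @[x --> \oo] --> P (\bigcup_n F n) := nondecreasing_cvg_mu mF mU ndF.
rewrite (prE mU) in hc.
have [_ h] := (fine_cvgP _ _).1 hc.
have := @cvgr_dist_lt R R^o nat \oo _ _ _ h e e0.
move=> [N _ HN].
exists N; have /= := HN N (leqnn N).
move=> /ltW; exact: ler_distlDr.
Qed.
End H.


Lemma enum_countable (U : Type) (C : set U) (u0 : U) : countable C ->
  exists e : nat -> U, C `<=` range e.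
Proof.
move=> /countable_injP [f finj].
exists (fun n => match pselect (exists c, C c /\ f c = n) with
         | left h => proj1_sig (cid h) | right _ => u0 end).
move=> c Cc; exists (f c) => //.
case: pselect => [h|]; last by move=> nh; exfalso; apply: nh; exists c.
case: (cid h) => c' [Cc' e] /=.
by apply: finj; rewrite ?inE.
Qed.

Section H3.
Context {R : realType} {dT : measure_display} {T : measurableType dT} (P : probability T R).
Local Notation pr A := (fine (P A)).

Lemma pr_approx (U : Type) (e : nat -> U) (C : set U) (E : U -> set T) (B : set T) :
  C `<=` range e -> (forall c, measurable (E c)) -> measurable B ->
  B `<=` \bigcup_(c in C) E c ->
  forall eps, 0 < eps -> exists n,
  pr B <= pr (\bigcup_(k in [set k | (k < n)%N /\ C (e k)]) E (e k)) + eps.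
Proof.
move=> Ce mE mB BC eps eps0.
pose F n := \bigcup_(k in [set k | (k < n)%N /\ C (e k)]) E (e k).
have mF n : measurable (F n) by apply: bigcup_measurable => k _.
have ndF : {homo F : n m / (n <= m)%N >-> (n <= m)%O}.
  move=> n m nm; apply/subsetPset => x [k [kn Ck] Ex].
  by exists k => //; split => //; exact: leq_trans kn nm.
have [n hn] := pr_cont P mF ndF eps0.
exists n; apply: (le_trans _ hn); apply: pr_le => //.
  exact: bigcupT_measurable.
move=> x /BC [c Cc Ex]; have [k _ ek] := Ce c Cc; exists k.+1 => //.
by exists k; [split=> //; rewrite ek | rewrite ek].
Qed.

Lemma pr_bigU (I : choiceType) (s : seq I) (G : I -> set T) : uniq s ->
  (forall i, measurable (G i)) -> (forall i j x, G i x -> G j x -> i = j) ->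
  pr (\big[setU/set0]_(i <- s) G i) = \sum_(i <- s) pr (G i).
Proof.
move=> + mG dG; elim: s => [|i s IH] /=.
  by rewrite !big_nil measure0.
move=> /andP [nis us].
rewrite !big_cons -IH //.
have ms : measurable (\big[setU/set0]_(j <- s) G j) by apply: bigsetU_measurable.
have dj : G i `&` \big[setU/set0]_(j <- s) G j = set0.
  apply/seteqP; split => // x [Gx]; rewrite -bigcup_seq => -[j /= js Gj].
  by move: nis; rewrite (dG _ _ _ Gx Gj) js.
have h : P (G i `|` \big[setU/set0]_(j <- s) G j) =
  (P (G i) + P (\big[setU/set0]_(j <- s) G j))%E := measureU _ (mG i) ms dj.
by rewrite h (prE P (mG i)) (prE P ms) -EFinD.
Qed.

Lemma pr_fin1 (Z : {RV P >-> R}) (L : seq R) t : uniq L ->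
  pr [set w | Z w \in L /\ Z w <= t] =
  \sum_(k < size L) (((L`_k <= t)%R)%:R * pr [set w | Z w = L`_k]).
Proof.
move=> uL.
pose G (k : 'I_(size L)) := if L`_k <= t then [set w | Z w = L`_k] else set0.
have mG k : measurable (G k) by rewrite /G; case: ifP => _ //; exact: meas_eq.
have dG : forall i j x, G i x -> G j x -> i = j.
  move=> i j x; rewrite /G; case: ifP => _ // /= hi; case: ifP => _ // /= hj.
  move: hj; rewrite hi => /eqP; rewrite nth_uniq // => /eqP; exact: ord_inj.
have -> : [set w | Z w \in L /\ Z w <= t] =
    \big[setU/set0]_(k <- index_enum 'I_(size L)) G k.
  rewrite -bigcup_seq; apply/seteqP; split => w /=.
  - move=> [wL wt].
    have ix : (index (Z w) L < size L)%N by rewrite index_mem.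
    exists (Ordinal ix); first exact: mem_index_enum.
    by rewrite /G /= nth_index // wt.
  - move=> [k _]; rewrite /G; case: ifP => // kt /= ->; split => //.
    exact: mem_nth.
rewrite pr_bigU //; last exact: index_enum_uniq.
apply: eq_bigr => k _; rewrite /G; case: ifP => _.
  by rewrite mul1r.
by rewrite mul0r measure0.
Qed.

Lemma pr_rect d (X : rvec P d) (L : seq R) (v : 'I_d -> R) : uniq L ->
  indep_components X ->
  pr [set w | forall i, X i w \in L /\ X i w <= v i] =
  \prod_i pr [set w | X i w \in L /\ X i w <= v i].
Proof.
move=> uL hX.
under eq_bigr do rewrite pr_fin1 //.
rewrite bigA_distr_bigA /=.
pose G (g : {ffun 'I_d -> 'I_(size L)}) :=
  if [forall i, L`_(g i) <= v i] then [set w | forall i, X i w = L`_(g i)] else set0.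
have mG g : measurable (G g).
  rewrite /G; case: ifP => _ //; apply: meas_forall => i; exact: meas_eq.
have dG : forall g h x, G g x -> G h x -> g = h.
  move=> g h x; rewrite /G; case: ifP => _ // /= hg; case: ifP => _ // /= hh.
  apply/ffunP => i; have := hh i; rewrite hg => /eqP.
  rewrite nth_uniq // => /eqP; exact: ord_inj.
have -> : [set w | forall i, X i w \in L /\ X i w <= v i] =
    \big[setU/set0]_(g <- index_enum {ffun 'I_d -> 'I_(size L)}) G g.
  rewrite -bigcup_seq; apply/seteqP; split => w /=.
  - move=> hw.
    have ix i : (index (X i w) L < size L)%N by rewrite index_mem; case: (hw i).
    exists [ffun i => Ordinal (ix i)]; first exact: mem_index_enum.
    rewrite /G; case: ifP => [_ /= i|/negbT].
      by rewrite ffunE /= nth_index //; case: (hw i).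
    rewrite negb_forall => /existsP [i]; rewrite ffunE /= nth_index.
      by case: (hw i) => _ ->.
    by case: (hw i).
  - move=> [g _]; rewrite /G; case: ifP => // /forallP hg /= hw i.
    rewrite hw; split; [exact: mem_nth | exact: hg].
rewrite pr_bigU //; last exact: index_enum_uniq.
apply: eq_bigr => g _; rewrite /G; case: ifP => [/forallP hg | /negbT].
  rewrite hX; apply: eq_bigr => i _; by rewrite hg mul1r.
rewrite negb_forall => /existsP [i hi]; rewrite measure0 /=.
by rewrite (bigD1 i) //= (negbTE hi) !mul0r.
Qed.

End H3.


Lemma prod_approx (R : realType) (I : Type) (r : seq I) (a b : I -> R) eps :
  0 <= eps -> (forall i, 0 <= a i <= 1) -> (forall i, 0 <= b i <= 1) ->
  (forall i, a i <= b i + eps) ->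
  \prod_(i <- r) a i <= \prod_(i <- r) b i + (size r)%:R * eps.
Proof.
move=> e0 ha hb hab; elim: r => [|i r IH]; first by rewrite !big_nil mul0r addr0.
rewrite !big_cons /=.
have /andP [a0 a1] := ha i; have /andP [b0 b1] := hb i.
have A0 : 0 <= \prod_(j <- r) a j by apply: prodr_ge0 => j _; case/andP: (ha j).
have B0 : 0 <= \prod_(j <- r) b j by apply: prodr_ge0 => j _; case/andP: (hb j).
have B1 : \prod_(j <- r) b j <= 1 by apply: prodr_ile1 => j _; exact: hb j.
have hi := hab i.
rewrite -natr1.
set A := \prod_(j <- r) a j in A0 IH *; set B := \prod_(j <- r) b j in B0 B1 IH *.
set n := (size r)%:R in IH *.
have n0 : 0 <= n by rewrite /n.
have h1 : a i * A <= a i * (B + n * eps) by apply: ler_wpM2l.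
have h2 : 0 <= (1 - a i) * (n * eps) by apply: mulr_ge0; [rewrite subr_ge0|apply: mulr_ge0].
have h3 : a i * B <= (b i + eps) * B by apply: ler_wpM2r.
have h4 : 0 <= eps * (1 - B) by apply: mulr_ge0; rewrite // subr_ge0.
nra.
Qed.

Section H4.
Context {R : realType} {dT : measure_display} {T : measurableType dT} (P : probability T R).
Local Notation pr A := (fine (P A)).

Definition vn d (i : 'I_d) (t : R) (n : nat) : 'I_d -> R :=
  fun j => if j == i then t else n%:R.

Lemma meas_cdf d (X : rvec P d) v : measurable [set w | lep (fun i => X i w) v].
Proof. exact: (meas_forall (fun i => meas_le (X i) (v i))). Qed.

Lemma marg_le d (X : rvec P d) i t n : cdfv X (vn i t n) <= cdf1 (X i) t.
Proof.
apply: pr_le; [exact: meas_cdf | exact: meas_le |].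
by move=> w /= h; have := h i; rewrite /vn eqxx.
Qed.

Lemma marg_approx d (X : rvec P d) i t eps : 0 < eps ->
  exists n, cdf1 (X i) t <= cdfv X (vn i t n) + eps.
Proof.
move=> e0.
pose F n := [set w | lep (fun j => X j w) (vn i t n)].
have mF n : measurable (F n) by exact: meas_cdf.
have ndF : {homo F : n m / (n <= m)%N >-> (n <= m)%O}.
  move=> n m nm; apply/subsetPset => w /= h j; have := h j; rewrite /vn.
  by case: (j == i) => // h1; apply: (le_trans h1); rewrite ler_nat.
have [n hn] := pr_cont P mF ndF e0.
exists n; rewrite /cdf1 (_ : [set w | X i w <= t] = \bigcup_n F n) //.
apply/seteqP; split => w /=.
- move=> wt; exists (\max_j (Num.trunc `|X j w|).+1)%N => //= j; rewrite /vn.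
  case: eqP => [->//|_].
  apply: (le_trans (ler_norm _)); apply: ltW; apply: (lt_le_trans (truncnS_gt _)).
  rewrite ler_nat; exact: leq_bigmax.
- by move=> [n' _ h]; have := h i; rewrite /vn eqxx.
Qed.

Lemma meas_inL (Z : {RV P >-> R}) (L : seq R) : measurable [set w | Z w \in L].
Proof.
rewrite (_ : [set w | Z w \in L] = \big[setU/set0]_(x <- L) [set w | Z w = x]).
  by apply: bigsetU_measurable => x _; exact: meas_eq.
rewrite -bigcup_seq; apply/seteqP; split => w /=.
  by move=> h; exists (Z w).
by move=> [x xL ->].
Qed.

Lemma meas_inLle (Z : {RV P >-> R}) (L : seq R) t :
  measurable [set w | Z w \in L /\ Z w <= t].
Proof. exact: measurableI (meas_inL Z L) (meas_le Z t). Qed.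

End H4.


Section H5.
Context {R : realType} {dT : measure_display} {T : measurableType dT} (P : probability T R).
Local Notation pr A := (fine (P A)).

Lemma cdf_prod d (X : rvec P d) : discrete_rvec X -> indep_components X ->
  forall v, cdfv X v = \prod_i cdf1 (X i) (v i).
Proof.
move=> [S [cS PS]] hX v.
have [e Se] := enum_countable (fun _ : 'I_d => (0:R)) cS.
pose fib (s : 'I_d -> R) := [set w | forall i, X i w = s i].
have mfib s : measurable (fib s) by apply: meas_forall => i; exact: meas_eq.
pose N := [set w | S (fun i => X i w)].
have NE : N = \bigcup_(k in [set k | S (e k)]) fib (e k).
  apply/seteqP; split => w.
  - move=> Sw; have [k _ ek] := Se _ Sw; exists k; rewrite /= ek //.
  - move=> [k Sk fw]; rewrite /N /=.
    by have -> : (fun i => X i w) = e k by apply: funext => i; exact: fw i.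
have mN : measurable N by rewrite NE; apply: bigcup_measurable => k _.
have mA := meas_cdf X v.
set A := [set w | lep (fun i => X i w) v] in mA.
have mrect (L : seq R) : measurable [set w | forall i, X i w \in L /\ X i w <= v i].
  by apply: meas_forall => i; exact: meas_inLle.
apply/eqP; rewrite eq_le; apply/andP; split.
- apply/ler_addgt0Pr => eps eps0.
  have CS : [set s | S s /\ lep s v] `<=` range e by move=> s [Ss _]; exact: Se.
  have BC : A `&` N `<=` \bigcup_(c in [set s | S s /\ lep s v]) fib c.
    by move=> w [Aw Nw]; exists (fun i => X i w).
  have [n hn] := pr_approx P CS mfib (measurableI _ _ mA mN) BC eps0.
  set L := undup [seq e k i | k <- iota 0 n, i <- enum 'I_d].
  rewrite /cdfv -/A; apply: (le_trans (pr_full mN PS mA)); apply: (le_trans hn); rewrite lerD2r.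
  apply: (@le_trans _ _ (pr [set w | forall i, X i w \in L /\ X i w <= v i])).
    apply: pr_le => //; first by apply: bigcup_measurable => k _.
    move=> w [k [kn [Sk lek]] fw] i; rewrite fw; split; last exact: lek i.
    rewrite mem_undup; apply: allpairs_f; last exact: mem_enum.
    by rewrite mem_iota.
  rewrite pr_rect //; last exact: undup_uniq.
  apply: ler_prod => i _; rewrite fine_ge0 ?measure_ge0 //=.
  apply: pr_le; [exact: meas_inLle | exact: meas_le | by move=> w []].
- pose m : R := (size (index_enum 'I_d))%:R.
  have m1 : 0 < m + 1 by rewrite /m ltr_wpDl.
  apply/ler_addgt0Pr => eps eps0.
  set e' := eps / (m + 1).
  have e'0 : 0 < e' by rewrite /e' divr_gt0.
  have hi : forall i, exists n, cdf1 (X i) (v i) <=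
      pr (\bigcup_(k in [set k | (k < n)%N /\
            [set c | c <= v i /\ exists s, S s /\ s i = c] (e k i)])
          [set w | X i w = e k i]) + e'.
    move=> i.
    pose Ci := [set c | c <= v i /\ exists s, S s /\ s i = c].
    have CS : Ci `<=` range (fun k => e k i).
      move=> c [_ [s [Ss <-]]]; have [k _ ek] := Se s Ss; exists k => //.
      by rewrite /= ek.
    have mE : forall c, measurable [set w | X i w = c] by move=> c; exact: meas_eq.
    have mB : measurable ([set w | X i w <= v i] `&` N).
      exact: measurableI (meas_le _ _) mN.
    have BC : [set w | X i w <= v i] `&` N `<=` \bigcup_(c in Ci) [set w | X i w = c].
      move=> w [wv Nw]; exists (X i w) => //; split => //.
      by exists (fun j => X j w).
    have [n hn] := pr_approx P CS mE mB BC e'0.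
    exists n; apply: (le_trans _ hn).
    exact: pr_full mN PS (meas_le (X i) (v i)).
  have [nf hnf] := fin_all_exists hi.
  set M := (\max_i nf i)%N.
  set L := undup [seq e k i | k <- iota 0 M, i <- enum 'I_d].
  have hb i : cdf1 (X i) (v i) <= pr [set w | X i w \in L /\ X i w <= v i] + e'.
    apply: (le_trans (hnf i)); rewrite lerD2r; apply: pr_le => //.
      by apply: bigcup_measurable => k _; exact: meas_eq.
      exact: meas_inLle.
    move=> w [k [kn [kv _]] /= ->]; split => //.
    rewrite mem_undup; apply: allpairs_f; last exact: mem_enum.
    rewrite mem_iota /= add0n; apply: (leq_trans kn); exact: leq_bigmax.
  have := @prod_approx R _ (index_enum 'I_d) (fun i => cdf1 (X i) (v i))
    (fun i => pr [set w | X i w \in L /\ X i w <= v i]) e' (ltW e'0).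
  move=> /(_ _ _ hb) hp.
  have hp' := hp (fun i => andb_true_intro (conj (pr_ge0 _ _) (pr_le1 _ (meas_le _ _))))
    (fun i => andb_true_intro (conj (pr_ge0 _ _) (pr_le1 _ (meas_inLle _ _ _)))).
  apply: (le_trans hp'); rewrite -/m -pr_rect //; last exact: undup_uniq.
  have : pr [set w | forall i, X i w \in L /\ X i w <= v i] <= pr A.
    apply: pr_le => // w h i; exact: (h i).2.
  have : m * e' <= eps.
    rewrite /e' mulrA ler_pdivrMr //.
    have : 0 <= m by rewrite /m.
    nra.
  rewrite /cdfv -/A; lra.
Qed.

End H5.

Unset Implicit Arguments.
Theorem mainTheorem12 (R : realType) (d1 d2 : measure_display)
  (T1 : measurableType d1) (T2 : measurableType d2)
  (P1 : probability T1 R) (P2 : probability T2 R) (d : nat)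
  (X : rvec P1 d) (Y : rvec P2 d) :
  discrete_rvec X -> discrete_rvec Y ->
  indep_components X -> indep_components Y ->
  (dist_dom X Y <-> fsd_gt X Y).
Proof.
move=> dX dY iX iY; split.
- move=> [hge [i [hi [t ht]]]]; split => //.
  pose eps := (cdf1 (Y i) t - cdf1 (X i) t) / 2.
  have e0 : 0 < eps by rewrite /eps divr_gt0 // subr_gt0.
  have [n hn] := marg_approx Y i t e0.
  exists (vn i t n).
  have := marg_le X i t n.
  move: hn ht; rewrite /eps; lra.
- move=> [hge [v hv]]; split => //.
  have hm : forall i t, cdf1 (X i) t <= cdf1 (Y i) t.
    move=> i t; apply/ler_addgt0Pr => eps e0.
    have [n hn] := marg_approx X i t e0.
    apply: (le_trans hn); rewrite lerD2r.
    exact: le_trans (hge _) (marg_le Y i t n).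
  case: (boolP [exists i, cdf1 (X i) (v i) < cdf1 (Y i) (v i)]) => [/existsP [i hi] | hn].
    by exists i; split => //; exists (v i).
  exfalso.
  have : cdfv Y v <= cdfv X v.
    rewrite (cdf_prod dX iX) (cdf_prod dY iY); apply: ler_prod => i _.
    apply/andP; split; first exact: fine_ge0 (measure_ge0 _ _).
    move: hn; rewrite negb_exists => /forallP /(_ i).
    by rewrite -leNgt.
  by rewrite leNgt hv.
Qed.
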